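(* Let $S\subseteq R$ be an extension of commutative domains. Then $R$ is super-multiplicative if and only if for every maximal ideal $\mathfrak m$ of $S$ the ring $R_{\mathfrak m}$ is super-multiplicative.
   Context: $R_{\mathfrak m}$ denotes the localization of $R$ at the multiplicative set $S\setminus\mathfrak m$. For a commutative ring $A$ and an ideal $I$ with $[A:I]$ finite, $N(I)=[A:I]$ (additive index). $A$ is super-multiplicative if for every pair of $A$-ideals $I,J$ with $[A:IJ]$ finite one has $N(IJ)\geq N(I)N(J)$. *)

(* Defs.v *)
From HB Require Import structures.
From mathcomp Require Import all_boot all_order all_algebra.
Set Implicit Arguments. Unset Strict Implicit. Unset Printing Implicit Defensive.
Import Order.TTheory GRing.Theory Num.Theory.
Local Open Scope ring_scope.

Section IdealTheory.
Variable T : comRingType.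

Definition is_subring (A : T -> Prop) : Prop :=
  [/\ A 1, (forall x y, A x -> A y -> A (x - y))
     & (forall x y, A x -> A y -> A (x * y))].

Definition is_ideal (A I : T -> Prop) : Prop :=
  [/\ (forall x, I x -> A x), I 0,
      (forall x y, I x -> I y -> I (x - y))
    & (forall a x, A a -> I x -> I (a * x))].

Definition ideal_mul (I J : T -> Prop) : T -> Prop :=
  fun z => exists (n : nat) (x y : 'I_n -> T),
    (forall i, I (x i) /\ J (y i)) /\ z = \sum_(i < n) x i * y i.

(* ideal_index A I n  <->  [A : I] is finite and equal to n, i.e. the
   additive quotient A/I has exactly n cosets (a complete, irredundant
   system of n coset representatives exists). *)
Definition ideal_index (A I : T -> Prop) (n : nat) : Prop :=
  exists r : 'I_n -> T,
    [/\ (forall i, A (r i)),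
        (forall i j, I (r i - r j) -> i = j)
      & (forall a, A a -> exists i, I (a - r i))].

(* A is super-multiplicative: for all ideals I, J of A with [A:IJ]
   finite, N(IJ) >= N(I) N(J).  (Finiteness of [A:I], [A:J] follows from
   IJ being contained in I and J.) *)
Definition super_multiplicative (A : T -> Prop) : Prop :=
  forall I J, is_ideal A I -> is_ideal A J ->
    forall n p q, ideal_index A (ideal_mul I J) n ->
      ideal_index A I p -> ideal_index A J q -> (p * q <= n)%N.

Definition is_maximal_ideal (A m : T -> Prop) : Prop :=
  [/\ is_ideal A m, ~ m 1 &
      forall J, is_ideal A J -> (forall x, m x -> J x) ->
        (forall x, J x -> m x) \/ J 1].

End IdealTheory.

(* For a domain R and a subring S, the localization R_m = (S \ m)^{-1} R,
   realized (canonically) inside the fraction field of R. *)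
Definition localization (R : idomainType) (S m : R -> Prop) :
    {fraction R} -> Prop :=
  fun x => exists r s : R, [/\ S s, ~ m s &
    x = FracField.tofrac r / FracField.tofrac s].

(* Main.v *)
Require Import Defs.
From HB Require Import structures.
From mathcomp Require Import all_boot all_order all_algebra.
From mathcomp Require Import ring.
From Stdlib Require Import Classical ClassicalEpsilon.
Set Implicit Arguments. Unset Strict Implicit. Unset Printing Implicit Defensive.
Import GRing.Theory.
Local Open Scope ring_scope.


Definition pb (P : Prop) : bool := if excluded_middle_informative P then true else false.
Lemma pbP (P : Prop) : reflect P (pb P).
Proof. rewrite /pb; case: excluded_middle_informative => h; by constructor. Qed.

Section Gen.
Variable T : comRingType.
Implicit Types (A I J L M : T -> Prop) (x y z a b : T).

Definition grp L := L 0 /\ (forall x y, L x -> L y -> L (x - y)).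

Lemma sr0 A : is_subring A -> A 0.
Proof. by case=> h1 hB _; rewrite -(subrr 1); apply: hB. Qed.
Lemma srN A x : is_subring A -> A x -> A (- x).
Proof. move=> hA hx; rewrite -sub0r; have h0 := sr0 hA; case: hA => _ hB _; exact: hB. Qed.
Lemma srD A x y : is_subring A -> A x -> A y -> A (x + y).
Proof. move=> hA hx hy; rewrite -(opprK y); have hN := srN hA hy; case: (hA) => _ hB _; exact: hB. Qed.
Lemma srM A x y : is_subring A -> A x -> A y -> A (x * y).
Proof. by case=> _ _ hM; apply: hM. Qed.
Lemma srX A x k : is_subring A -> A x -> A (x ^+ k).
Proof. move=> hA hx; elim: k => [|k IH]; first by rewrite expr0; case: hA.
by rewrite exprS; apply: srM. Qed.
Lemma srB A x y : is_subring A -> A x -> A y -> A (x - y).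
Proof. by case=> _ hB _; apply: hB. Qed.

Lemma grp_ideal A L : is_ideal A L -> grp L.
Proof. by case=> _ h0 hB _. Qed.

Section G.
Variable L : T -> Prop.
Hypothesis hL : grp L.
Lemma g0 : L 0. Proof. by case: hL. Qed.
Lemma gB x y : L x -> L y -> L (x - y). Proof. by case: hL => _; apply. Qed.
Lemma gN x : L x -> L (- x). Proof. by move=> h; rewrite -sub0r; apply: gB => //; exact: g0. Qed.
Lemma gD x y : L x -> L y -> L (x + y).
Proof. by move=> hx hy; rewrite -(opprK y); apply: gB => //; exact: gN. Qed.
Lemma gsym x y : L (x - y) -> L (y - x).
Proof. by move=> h; rewrite -opprB; apply: gN. Qed.
Lemma gtr x y z : L (x - y) -> L (y - z) -> L (x - z).
Proof. move=> h1 h2; have -> : x - z = (x - y) + (y - z) by ring. exact: gD. Qed.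
Lemma geq x y : x = y -> L x -> L y. Proof. by move=> ->. Qed.
End G.

Section Id.
Variables (A I : T -> Prop).
Hypothesis hI : is_ideal A I.
Lemma i0 : I 0. Proof. by case: hI. Qed.
Lemma iB x y : I x -> I y -> I (x - y). Proof. by case: hI => _ _ h _; apply: h. Qed.
Lemma iD x y : I x -> I y -> I (x + y). Proof. by move=> hx hy; apply: (gD (grp_ideal hI)). Qed.
Lemma iN x : I x -> I (- x). Proof. by move=> hx; apply: (gN (grp_ideal hI)). Qed.
Lemma iM a x : A a -> I x -> I (a * x). Proof. by case: hI => _ _ _ h; apply: h. Qed.
Lemma iMr a x : A a -> I x -> I (x * a). Proof. by move=> ha hx; rewrite mulrC; apply: iM. Qed.
Lemma iA x : I x -> A x. Proof. by case: hI => h _ _ _; apply: h. Qed.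
Lemma isum n (F : 'I_n -> T) : (forall i, I (F i)) -> I (\sum_(i < n) F i).
Proof. by move=> h; apply: (big_ind I) => //; [exact: i0 | exact: iD]. Qed.
End Id.

Lemma ideal_T_mul I a x : is_ideal (fun _ => True) I -> I x -> I (a * x).
Proof. by move=> h hx; apply: (iM h). Qed.

Lemma im_ind I J (P : T -> Prop) z : P 0 -> (forall x y, P x -> P y -> P (x + y)) ->
  (forall x y, I x -> J y -> P (x * y)) -> ideal_mul I J z -> P z.
Proof.
move=> h0 hD hM [n [x [y [hxy ->]]]].
apply: (big_ind P) => // i _; case: (hxy i) => hx hy; exact: hM.
Qed.

Lemma im0 I J : ideal_mul I J 0.
Proof. exists 0%N, (fun _ => 0), (fun _ => 0); split; first by case. by rewrite big_ord0. Qed.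

Lemma im_prod I J x y : I x -> J y -> ideal_mul I J (x * y).
Proof. move=> hx hy; exists 1%N, (fun _ => x), (fun _ => y); split => //. by rewrite big_ord1. Qed.

Lemma im_add I J x y : ideal_mul I J x -> ideal_mul I J y -> ideal_mul I J (x + y).
Proof.
move=> [n [x1 [y1 [h1 ->]]]] [k [x2 [y2 [h2 ->]]]].
exists (n + k)%N, (fun i => match split i with inl a => x1 a | inr b => x2 b end),
  (fun i => match split i with inl a => y1 a | inr b => y2 b end); split.
  by move=> i; case: (split i) => a.
rewrite big_split_ord /=; congr (_ + _); apply: eq_bigr => i _.
  by rewrite (unsplitK (inl i)).
by rewrite (unsplitK (inr i)).
Qed.

Lemma im_mono I J I' J' z : (forall x, I x -> I' x) -> (forall x, J x -> J' x) ->
  ideal_mul I J z -> ideal_mul I' J' z.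
Proof.
move=> hI hJ [n [x [y [h ->]]]]; exists n, x, y; split => // i.
by case: (h i) => ??; split; [apply: hI | apply: hJ].
Qed.

Lemma im_mul A I J a z : is_ideal A I -> A a -> ideal_mul I J z -> ideal_mul I J (a * z).
Proof.
move=> hI ha; apply: (im_ind (P := fun z => ideal_mul I J (a * z))).
- by rewrite mulr0; exact: im0.
- by move=> x y hx hy; rewrite mulrDr; apply: im_add.
- by move=> x y hx hy; rewrite mulrA; apply: im_prod => //; apply: (iM hI).
Qed.

Lemma im_grp A I J : is_ideal A I -> grp (ideal_mul I J).
Proof.
move=> hI; split; first exact: im0.
move=> x y hx hy; apply: im_add => //.
have -> : - y = (-1) * y by ring.
apply: (im_ind (P := fun z => ideal_mul I J ((-1) * z))) hy.
- by rewrite mulr0; exact: im0.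
- by move=> u v hu hv; rewrite mulrDr; apply: im_add.
- move=> u v hu hv; rewrite mulrA; apply: im_prod => //.
  by rewrite mulN1r; apply: (iN hI).
Qed.

Lemma im_ideal A I J : is_subring A -> is_ideal A I -> is_ideal A J -> is_ideal A (ideal_mul I J).
Proof.
move=> hA hI hJ; split.
- move=> z; apply: (im_ind (P := A)); [exact: sr0 | by move=> ????; apply: srD |].
  by move=> x y hx hy; apply: srM => //; [apply: (iA hI) | apply: (iA hJ)].
- exact: im0.
- exact: (gB (im_grp J hI)).
- by move=> a x ha hx; apply: (im_mul hI).
Qed.

Lemma im_subl A I J z : is_ideal A I -> (forall y, J y -> A y) -> ideal_mul I J z -> I z.
Proof.
move=> hI hJ; apply: (im_ind (P := I)); [exact: i0 hI | by move=> ????; apply: (iD hI) |].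
by move=> x y hx hy; apply: (iMr hI) => //; apply: hJ.
Qed.

Lemma im_subr A I J z : is_ideal A J -> (forall y, I y -> A y) -> ideal_mul I J z -> J z.
Proof.
move=> hJ hI; apply: (im_ind (P := J)); [exact: i0 hJ | by move=> ????; apply: (iD hJ) |].
by move=> x y hx hy; apply: (iM hJ) => //; apply: hI.
Qed.

End Gen.

Section FieldIds.
Variable F : fieldType.
Lemma fid0 (b y : F) : b != 0 -> y = (1 / b) * (b * y).
Proof. move=> h; field; exact h. Qed.
Lemma fid1 (a b t : F) : b != 0 -> a / b - a * t = a / b * (1 - b * t).
Proof. move=> h. field. exact h. Qed.
Lemma fid2 (a u : F) : u != 0 -> a = u * (a / u).
Proof. move=> h; field; exact h. Qed.
Lemma fid3 (s u v a b w : F) : u != 0 -> v != 0 ->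
  s * w * (u * v) + s * (a * b) = s * u * v * (w + a / u * (b / v)).
Proof. move=> hu hv; field; by rewrite hu hv. Qed.
Lemma fid4 (a b s t : F) : s != 0 -> t != 0 -> a / s - b / t = (a * t - b * s) / (s * t).
Proof. move=> hs ht; field; by rewrite hs ht. Qed.
Lemma fid6 (x b s : F) : s != 0 -> x = b / s -> x * s = b.
Proof. move=> hs ->; field; exact hs. Qed.
Lemma fid7 (x y s : F) : x * y / s = (x / 1) * (y / s).
Proof. by rewrite divr1 mulrA. Qed.
Lemma fid8 (c u z : F) : u != 0 -> c / u - z = (c - u * z) / u.
Proof. move=> hu; field; exact hu. Qed.
End FieldIds.


Lemma fae (X : finType) (Y : Type) (P : X -> Y -> Prop) :
  (forall x, exists y, P x y) -> exists f : X -> Y, forall x, P x (f x).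
Proof. exact: (@fin_all_exists X (fun _ => Y) P). Qed.

Section Idx.
Variable T : comRingType.
Implicit Types (A I J L M : T -> Prop) (x y z a b : T).

Lemma idx_ext A L L' n : (forall x, L x <-> L' x) -> ideal_index A L n -> ideal_index A L' n.
Proof.
move=> h [r [h1 h2 h3]]; exists r; split => //.
- by move=> i j /h; apply: h2.
- by move=> a /h3 [i /h hi]; exists i.
Qed.

Lemma idx_leq A L n n' : grp L -> ideal_index A L n -> ideal_index A L n' -> (n <= n')%N.
Proof.
move=> hL [r [h1 h2 h3]] [r' [h1' h2' h3']].
have [f hf] : exists f : 'I_n -> 'I_n', forall i, L (r i - r' (f i)).
  by apply: (fae (P := fun i j => L (r i - r' j))) => i; apply: h3'.
have inj : injective f.
  move=> i j e; apply: h2; apply: (gtr hL (hf i)); rewrite e; exact: (gsym hL (hf j)).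
by have := @leq_card _ _ f inj; rewrite !card_ord.
Qed.

Lemma idx_unique A L n n' : grp L -> ideal_index A L n -> ideal_index A L n' -> n = n'.
Proof. by move=> hL h h'; apply/eqP; rewrite eqn_leq (idx_leq hL h h') (idx_leq hL h' h). Qed.

Lemma idx_fin A L (X : finType) (r : X -> T) :
  (forall i, A (r i)) -> (forall i j, L (r i - r j) -> i = j) ->
  (forall a, A a -> exists i, L (a - r i)) -> ideal_index A L #|X|.
Proof.
move=> h1 h2 h3; exists (fun k => r (enum_val k)); split => //.
- by move=> i j /h2 /enum_val_inj.
- move=> a /h3 [i hi]; exists (enum_rank i); by rewrite enum_rankK.
Qed.

Lemma idx_pos A L n : A 0 -> ideal_index A L n -> (0 < n)%N.
Proof. by move=> h0 [r [_ _ h3]]; case: (h3 0 h0) => i _; case: n i {r h3} => [[]|]. Qed.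

Lemma idx_one A L n : grp L -> (forall a, A a -> L a) -> A 0 -> ideal_index A L n -> n = 1%N.
Proof.
move=> hL hA h0 h; have h1 : ideal_index A L #|'I_1|.
  apply: (@idx_fin A L _ (fun _ => 0)) => //.
  - by move=> i j _; rewrite (ord1 i) (ord1 j).
  - by move=> a ha; exists ord0; rewrite subr0; apply: hA.
by rewrite (idx_unique hL h h1) card_ord.
Qed.

Lemma idx_ge2 A L n : grp L -> ~ L 1 -> A 0 -> A 1 -> ideal_index A L n -> (1 < n)%N.
Proof.
move=> hL n1 h0 h1 [r [_ h2 h3]]; case: n r h2 h3 => [|[|n]] // r h2 h3.
- by case: (h3 0 h0) => [[]].
- case: (h3 0 h0) => i hi; case: (h3 1 h1) => j hj.
  have eij : i = j by rewrite (ord1 i) (ord1 j).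
  subst j; exfalso; apply: n1; have -> : (1 : T) = (1 - r i) - (0 - r i) by ring.
  exact: gB.
Qed.

Lemma idx_coarsen A L L' n : grp L' -> (forall x, L x -> L' x) -> ideal_index A L n ->
  exists n', ideal_index A L' n'.
Proof.
move=> hL' hLL' [r [h1 h2 h3]].
pose D := fun i : 'I_n => pb (forall j : 'I_n, (j < i)%N -> ~ L' (r i - r j)).
exists #|{: {i : 'I_n | D i}}|; apply: (@idx_fin A L' _ (fun x : {i : 'I_n | D i} => r (val x))).
- by move=> x; apply: h1.
- move=> [i Di] [j Dj] /= hij; apply: val_inj => /=.
  move/pbP: Di => Di; move/pbP: Dj => Dj.
  case: (ltngtP i j) => c; last by apply: ord_inj.
  + by case: (Dj i c); apply: gsym.
  + by case: (Di j c).
- move=> a ha; case: (h3 a ha) => i hi.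
  pose P := fun k => pb (exists j : 'I_n, nat_of_ord j = k /\ L' (r i - r j)).
  have exP : exists k, P k.
    exists (nat_of_ord i); apply/pbP; exists i; split => //.
    by rewrite subrr; case: hL'.
  case: (ex_minnP exP) => k /pbP [j0 [ej0 hj0]] hmin.
  have Dj0 : D j0.
    apply/pbP => j ltj hj; have : P j.
      apply/pbP; exists j; split => //; exact (gtr hL' hj0 hj).
    by move/hmin; rewrite -ej0 leqNgt ltj.
  exists (exist _ j0 Dj0) => /=; apply: (gtr hL' (hLL' _ hi) hj0).
Qed.

Lemma pigeon A L n (f : nat -> T) : grp L -> ideal_index A L n -> (forall k, A (f k)) ->
  exists k k', (k < k')%N /\ L (f k - f k').
Proof.
move=> hL [r [h1 h2 h3]] hf.
have [h hh] : exists h : 'I_n.+1 -> 'I_n, forall k : 'I_n.+1, L (f k - r (h k)).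
  by apply: (fae (P := fun (k : 'I_n.+1) j => L (f k - r j))) => k; apply: h3; apply: hf.
have ninj : ~ injective h by move=> ih; have := @leq_card _ _ h ih; rewrite !card_ord ltnn.
have [k [k' [e ne]]] : exists k k', h k = h k' /\ k <> k'.
  apply: NNPP => C; apply: ninj => x y e; apply: NNPP => ne; apply: C; by exists x, y.
have hkk : L (f k - f k') by apply: (gtr hL (hh k)); rewrite e; apply: gsym => //.
case: (ltngtP k k') => c.
- by exists k, k'.
- by exists k', k; split => //; apply: gsym.
- by case: ne; apply: ord_inj.
Qed.

End Idx.

Section Transfer.
Variables (T T2 : comRingType) (A L : T -> Prop) (B M : T2 -> Prop) (g : T -> T2).
Hypotheses (hL : grp L) (hM : grp M) (hAB : forall a, A a -> B (g a))
  (hc : forall a a', A a -> A a' -> L (a - a') -> M (g a - g a'))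
  (hi : forall a a', A a -> A a' -> M (g a - g a') -> L (a - a'))
  (hs : forall b, B b -> exists a, A a /\ M (b - g a)).

Lemma idx_fwd n : ideal_index A L n -> ideal_index B M n.
Proof.
move=> [r [h1 h2 h3]]; exists (fun i => g (r i)); split.
- by move=> i; apply: hAB.
- by move=> i j /hi; move/(_ (h1 i) (h1 j)); apply: h2.
- move=> b /hs [a [ha hb]]; case: (h3 a ha) => i hai; exists i.
  exact (gtr hM hb (hc ha (h1 i) hai)).
Qed.

Lemma idx_bwd n : ideal_index B M n -> ideal_index A L n.
Proof.
move=> [r [h1 h2 h3]].
have [a ha] : exists a : 'I_n -> T, forall i, A (a i) /\ M (r i - g (a i)).
  by apply: (fae (P := fun i x => A x /\ M (r i - g x))) => i; apply: hs.
exists a; split.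
- by move=> i; case: (ha i).
- move=> i j hij; apply: h2; case: (ha i) => ai mi; case: (ha j) => aj mj.
  apply: (gtr hM mi); apply: (gtr hM (hc ai aj hij)); exact (gsym hM mj).
- move=> x hx; case: (h3 _ (hAB hx)) => i hxi; exists i.
  case: (ha i) => ai mi; apply: hi => //; exact (gtr hM hxi mi).
Qed.
End Transfer.


Section Loc.
Variables (R : idomainType) (S : R -> Prop) (HS : is_subring S) (m : R -> Prop).
Hypothesis Hm : is_maximal_ideal S m.
Local Notation tf := (@FracField.tofrac R).
Local Notation loc := (localization S m).

Lemma m_ideal : is_ideal S m. Proof. by case: Hm. Qed.
Lemma m0 : m 0. Proof. exact: i0 m_ideal. Qed.
Lemma m1 : ~ m 1. Proof. by case: Hm. Qed.

Lemma max_prime s t : S s -> S t -> ~ m s -> ~ m t -> ~ m (s * t).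
Proof.
move=> Ss St ms mt mst.
pose J' := fun x => exists y z, [/\ S y, m z & x = y * s + z].
have hJ : is_ideal S J'.
  split.
  - move=> x [y [z [Sy mz ->]]]; apply: srD => //; first exact: srM.
    exact: (iA m_ideal).
  - exists 0, 0; split => //; [exact: sr0 | exact: m0 | by rewrite mul0r addr0].
  - move=> x x' [y [z [Sy mz ->]]] [y' [z' [Sy' mz' ->]]].
    exists (y - y'), (z - z'); split; [exact: srB | exact: (iB m_ideal) | ring].
  - move=> a x Sa [y [z [Sy mz ->]]]; exists (a * y), (a * z); split.
    + exact: srM. + exact: (iM m_ideal). + ring.
case: Hm => _ _ /(_ J' hJ) [].
- by move=> z mz; exists 0, z; split => //; [exact: sr0 | ring].
- move=> sub; apply: ms; apply: sub; exists 1, 0; split; [by case: HS | exact: m0 | ring].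
- move=> [y [z [Sy mz e]]]; apply: mt.
  have -> : t = y * (s * t) + t * z by rewrite mulrA (mulrC t z) -mulrDl -e mul1r.
  apply: (iD m_ideal); apply: (iM m_ideal) => //; exact: (iA m_ideal).
Qed.

Lemma Sne0 s : ~ m s -> tf s != 0.
Proof. by move=> ms; rewrite tofrac_eq0; apply/eqP => e; apply: ms; rewrite e; exact: m0. Qed.

Lemma loc_tf a : loc (tf a).
Proof. exists a, 1; split; [by case: HS | exact: m1 | by rewrite tofrac1 divr1]. Qed.

Lemma loc_inv s : S s -> ~ m s -> loc (1 / tf s).
Proof. by move=> Ss ms; exists 1, s; split => //; rewrite tofrac1. Qed.

End Loc.

Section Fwd.
Variables (R : idomainType) (S : R -> Prop) (HS : is_subring S) (m : R -> Prop).
Hypothesis Hm : is_maximal_ideal S m.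
Local Notation tf := (@FracField.tofrac R).
Local Notation loc := (localization S m).
Variables (I J : {fraction R} -> Prop) (HI : is_ideal loc I) (HJ : is_ideal loc J).
Variables (n : nat) (Hn : ideal_index loc (ideal_mul I J) n).
Local Notation K := (ideal_mul I J).

Let gK : grp K := im_grp J HI.

Lemma cancelK s k y : S s -> ~ m s -> K (tf s ^+ k * y) -> K y.
Proof.
move=> Ss ms; elim: k y => [|k IH] y; first by rewrite expr0 mul1r.
move=> h; have /IH h2 : K (tf s ^+ k * (tf s * y)) by rewrite mulrA -exprSr.
rewrite (fid0 y (Sne0 Hm ms)).
by apply: (im_mul HI) => //; apply: loc_inv.
Qed.

Lemma unitK0 s : S s -> ~ m s -> exists c, (0 < c)%N /\ K (1 - tf s ^+ c).
Proof.
move=> Ss ms.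
have hf : forall k, loc (tf s ^+ k) by move=> k; rewrite -tofracXn; apply: loc_tf.
have [k [k' [lt h]]] := pigeon gK Hn hf.
exists (k' - k)%N; split; first by rewrite subn_gt0.
apply: (cancelK (k := k) Ss ms).
have e : k' = (k + (k' - k))%N by rewrite subnKC // ltnW.
by rewrite e exprD in h; rewrite mulrBr mulr1.
Qed.

Lemma unitK s : S s -> ~ m s -> exists c, K (1 - tf s ^+ c.+1).
Proof. by move=> Ss ms; case: (unitK0 Ss ms) => [[|c] [//= _ h]]; exists c. Qed.

Lemma surjK x : loc x -> exists y : R, True /\ K (x - tf y).
Proof.
move=> lx; case: (lx) => r [s [Ss ms ex]].
have [c hc] := unitK Ss ms.
exists (r * s ^+ c); split => //.
have -> : x - tf (r * s ^+ c) = x * (1 - tf s ^+ c.+1).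
  by rewrite tofracM tofracXn ex exprS fid1 //; exact: (Sne0 Hm ms).
exact: (im_mul HI).
Qed.

Lemma KI z : K z -> I z.
Proof. apply: (im_subl HI); exact: (iA HJ). Qed.
Lemma KJ z : K z -> J z.
Proof. apply: (im_subr HJ); exact: (iA HI). Qed.

Definition contr (L : {fraction R} -> Prop) := fun a : R => L (tf a).

Lemma contr_ideal L : is_ideal loc L -> is_ideal (fun _ => True) (contr L).
Proof.
move=> hL; split => //.
- by rewrite /contr tofrac0; exact: i0 hL.
- by move=> x y; rewrite /contr tofracB; apply: (iB hL).
- by move=> a x _; rewrite /contr tofracM; apply: (iM hL); apply: loc_tf.
Qed.

Let HI' := contr_ideal HI.
Let HJ' := contr_ideal HJ.

Lemma clear_den N (x y : 'I_N -> {fraction R}) : (forall i, I (x i) /\ J (y i)) ->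
  exists s w, [/\ S s, ~ m s, ideal_mul (contr I) (contr J) w &
     tf w = tf s * \sum_(i < N) x i * y i].
Proof.
elim: N x y => [|N IH] x y hxy.
  exists 1, 0; split; [by case: HS | exact: m1 Hm | exact: im0 |].
  by rewrite big_ord0 tofrac0 mulr0.
have [s [w [Ss ms hw ew]]] := IH (fun i => x (widen_ord (leqnSn N) i))
   (fun i => y (widen_ord (leqnSn N) i)) (fun i => hxy _).
case: (hxy ord_max) => hx hy.
case: (iA HI hx) => a [u [Su mu eu]].
case: (iA HJ hy) => b [v [Sv mv ev]].
have Ia : contr I a.
  rewrite /contr; have -> : tf a = tf u * x ord_max.
    by rewrite eu -fid2 //; exact: (Sne0 Hm mu).
  by apply: (iM HI) => //; apply: loc_tf.
have Jb : contr J b.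
  rewrite /contr; have -> : tf b = tf v * y ord_max.
    by rewrite ev -fid2 //; exact: (Sne0 Hm mv).
  by apply: (iM HJ) => //; apply: loc_tf.
exists (s * u * v), (w * (u * v) + s * (a * b)); split.
- by apply: srM => //; apply: srM.
- by apply: (max_prime HS Hm) => //; [exact: srM | exact: (max_prime HS Hm)].
- apply: im_add; first by rewrite mulrC; apply: (im_mul HI').
  by apply: (im_mul HI') => //; apply: im_prod.
- rewrite big_ord_recr /= !tofracD !tofracM ew eu ev.
  by rewrite fid3 //; [exact: (Sne0 Hm mu) | exact: (Sne0 Hm mv)].
Qed.

Lemma liftK z : K (tf z) -> ideal_mul (contr I) (contr J) z.
Proof.
move=> hz; have := hz; move=> [N [x [y [hxy ez]]]].
have [s [w [Ss ms hw ew]]] := clear_den hxy.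
have wsz : w = s * z.
  by apply/eqP; rewrite -tofrac_eq tofracM ew ez.
have [c hc] := unitK Ss ms.
set u := 1 - s ^+ c.+1.
have tu : tf u = 1 - tf s ^+ c.+1 by rewrite /u tofracB tofrac1 tofracXn.
have Iu : contr I u by rewrite /contr tu; apply: KI.
have Ju : contr J u by rewrite /contr tu; apply: KJ.
have -> : z = z * (u * u) + (s ^+ c * (1 + u)) * (s * z).
  rewrite /u exprS; set t := s ^+ c; ring.
apply: im_add; first by apply: (im_mul HI') => //; apply: im_prod.
by rewrite -wsz; apply: (im_mul HI').
Qed.

Lemma fwd_main (Hsm : super_multiplicative (fun _ : R => True)) p q :
  ideal_index loc I p -> ideal_index loc J q -> (p * q <= n)%N.
Proof.
move=> Hp Hq.
have trI : forall L, is_ideal loc L -> (forall z, K z -> L z) ->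
    forall k, ideal_index loc L k -> ideal_index (fun _ => True) (contr L) k.
  move=> L hL KL k hk.
  apply: (@idx_bwd _ _ _ (contr L) loc L tf) => //.
  - exact (grp_ideal hL).
  - by move=> a _; apply: loc_tf.
  - by move=> a a' _ _; rewrite /contr tofracB.
  - by move=> a a' _ _; rewrite /contr tofracB.
  - by move=> b /surjK [a [_ ha]]; exists a; split => //; apply: KL.
have Hp' := trI _ HI KI _ Hp.
have Hq' := trI _ HJ KJ _ Hq.
have Hn' : ideal_index (fun _ => True) (ideal_mul (contr I) (contr J)) n.
  apply: (@idx_bwd _ _ _ _ loc K tf) => //.
  - by move=> a _; apply: loc_tf.
  - move=> a a' _ _ h; rewrite -tofracB.
    apply: (im_ind (P := fun z => K (tf z))) h.
    + by rewrite tofrac0; exact: im0.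
    + by move=> ? ? ? ?; rewrite tofracD; apply: im_add.
    + by move=> ? ? ? ?; rewrite tofracM; apply: im_prod.
  - by move=> a a' _ _; rewrite -tofracB; apply: liftK.
  - by move=> b /surjK.
exact: Hsm HI' HJ' _ _ _ Hn' Hp' Hq'.
Qed.
End Fwd.

Lemma forward (R : idomainType) (S : R -> Prop) (HS : is_subring S) :
  super_multiplicative (fun _ : R => True) ->
  (forall m : R -> Prop, is_maximal_ideal S m ->
     super_multiplicative (localization S m)).
Proof.
move=> Hsm m Hm I J HI HJ n p q Hn Hp Hq.
exact: (fwd_main HS Hm HI HJ Hn Hsm Hp Hq).
Qed.



Section Addp.
Variable T : comRingType.
Local Notation TT := (fun _ : T => True).
Implicit Types (I J L : T -> Prop).

Definition addp L (a : T) := fun z => exists l r, L l /\ z = l + a * r.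

Lemma TT_subring : is_subring TT. Proof. by []. Qed.

Lemma addp_ideal L a : is_ideal TT L -> is_ideal TT (addp L a).
Proof.
move=> hL; split => //.
- exists 0, 0; split; [exact: i0 hL | ring].
- move=> x y [l [r [hl ->]]] [l' [r' [hl' ->]]]; exists (l - l'), (r - r'); split.
  + exact: (iB hL). + ring.
- move=> c x _ [l [r [hl ->]]]; exists (c * l), (c * r); split.
  + exact: (iM hL). + ring.
Qed.

Lemma addp_sup L a z : is_ideal TT L -> L z -> addp L a z.
Proof. by move=> hL hz; exists z, 0; split => //; rewrite mulr0 addr0. Qed.

Lemma addp_a L a r : is_ideal TT L -> addp L a (a * r).
Proof. by move=> hL; exists 0, r; split; [exact: i0 hL | rewrite add0r]. Qed.

Lemma decomp L e n : is_ideal TT L -> L (e * e - e) -> ideal_index TT L n ->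
  exists n1 n2, [/\ ideal_index TT (addp L (1 - e)) n1,
     ideal_index TT (addp L e) n2 & n = (n1 * n2)%N].
Proof.
move=> hL hee hn.
have g1 := grp_ideal (addp_ideal (1 - e) hL).
have g2 := grp_ideal (addp_ideal e hL).
have gL := grp_ideal hL.
have [n1 h1] := idx_coarsen g1 (fun z hz => addp_sup (1 - e) hL hz) hn.
have [n2 h2] := idx_coarsen g2 (fun z hz => addp_sup e hL hz) hn.
exists n1, n2; split => //.
move: (h1) (h2) => [u [_ u2 u3]] [v [_ v2 v3]].
pose w := fun x : 'I_n1 * 'I_n2 => e * u x.1 + (1 - e) * v x.2.
have wu : forall x, addp L (1 - e) (w x - u x.1).
  move=> x; exists 0, (v x.2 - u x.1); split; [exact: i0 hL | rewrite /w; ring].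
have wv : forall x, addp L e (w x - v x.2).
  move=> x; exists 0, (u x.1 - v x.2); split; [exact: i0 hL | rewrite /w; ring].
have hw : ideal_index TT L #|{: 'I_n1 * 'I_n2}|.
  apply: (@idx_fin _ _ _ _ w) => //.
  - move=> [i j] [i' j'] h.
    have e1 : i = i'.
      apply: u2; apply: (gtr g1 (gsym g1 (wu (i, j)))).
      apply: (gtr g1 (addp_sup _ hL h)); exact: (wu (i', j')).
    have e2 : j = j'.
      apply: v2; apply: (gtr g2 (gsym g2 (wv (i, j)))).
      apply: (gtr g2 (addp_sup _ hL h)); exact: (wv (i', j')).
    by rewrite e1 e2.
  - move=> a _; case: (u3 a Logic.I) => i [l [r [hl ea]]].
    case: (v3 a Logic.I) => j [l' [r' [hl' eb]]].
    exists (i, j).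
    have -> : a - w (i, j) = e * (a - u i) + (1 - e) * (a - v j) by rewrite /w /=; ring.
    rewrite ea eb.
    have -> : e * (l + (1 - e) * r) + (1 - e) * (l' + e * r') =
       e * l + (1 - e) * l' - (r + r') * (e * e - e) by ring.
    apply: (iB hL); first by apply: (iD hL); apply: (iM hL).
    exact: (iM hL).
by rewrite (idx_unique gL hn hw) card_prod !card_ord.
Qed.

Lemma mulp I J a : is_ideal TT I -> is_ideal TT J -> ideal_mul I J (a * a - a) ->
  forall z, ideal_mul (addp I a) (addp J a) z <-> addp (ideal_mul I J) a z.
Proof.
move=> hI hJ haa z.
have hK := im_ideal TT_subring hI hJ.
have hI' := addp_ideal a hI; have hJ' := addp_ideal a hJ.
have hK' := im_ideal TT_subring hI' hJ'.
split.
- apply: (im_ind (P := addp (ideal_mul I J) a)).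
  + exact: (i0 (addp_ideal a hK)).
  + by move=> x y hx hy; apply: (iD (addp_ideal a hK)).
  + move=> x y [l [r [hl ->]]] [l' [r' [hl' ->]]].
    exists (l * l'), (r * l' + l * r' + a * r * r'); split.
    * exact: im_prod. * ring.
- move=> [l [r [hl ->]]]; apply: (iD hK').
  + apply: im_mono hl => x hx; exact: addp_sup.
  + have -> : a * r = a * (a * r) - r * (a * a - a) by ring.
    apply: (iB hK'); first apply: im_prod.
      by have := @addp_a I a 1 hI; rewrite mulr1.
      exact: (@addp_a J a r hJ).
    apply: im_mono (iM hK Logic.I haa) => x hx; exact: addp_sup.
Qed.
End Addp.


Section Step.
Variables (R : idomainType) (S : R -> Prop) (HS : is_subring S).
Local Notation TT := (fun _ : R => True).
Local Notation tf := (@FracField.tofrac R).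
Variables (I J : R -> Prop) (HI : is_ideal TT I) (HJ : is_ideal TT J).
Local Notation K := (ideal_mul I J).
Let HK : is_ideal TT K := im_ideal (@TT_subring R) HI HJ.
Let gK : grp K := grp_ideal HK.
Variables (n : nat) (Hn : ideal_index TT K n).

Lemma Kmul a x : K x -> K (a * x). Proof. exact: (iM HK). Qed.
Lemma Kmulr a x : K x -> K (x * a). Proof. exact: (iMr HK). Qed.

Lemma idpow x : exists N, K (x ^+ N.+1 * x ^+ N.+1 - x ^+ N.+1).
Proof.
have [k [k' [lt h]]] := pigeon (f := fun k => x ^+ k) gK Hn (fun _ => Logic.I).
set d := (k' - k)%N.
have dpos : (0 < d)%N by rewrite subn_gt0.
have ek' : k' = (k + d)%N by rewrite subnKC // ltnW.
rewrite ek' in h.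
have step : forall t, K (x ^+ k - x ^+ (k + t * d)).
  elim => [|t IH]; first by rewrite mul0n addn0 subrr; exact: (g0 gK).
  have -> : x ^+ k - x ^+ (k + t.+1 * d) =
      (x ^+ k - x ^+ (k + t * d)) + x ^+ (t * d) * (x ^+ k - x ^+ (k + d)).
    rewrite mulSn !exprD; set a := x ^+ k; set b := x ^+ d; set c := x ^+ (t * d); ring.
  exact: (gD gK IH (Kmul _ h)).
set M := (k.+1 * d)%N.
have Mpos : (0 < M)%N by rewrite muln_gt0.
have kM : (k <= M)%N by rewrite /M mulSn -{1}(addn0 k) addnC leq_add // ?leq_pmulr.
exists M.-1; rewrite prednK //.
have hM := Kmul (x ^+ (M - k)) (step k.+1).
rewrite mulrBr -!exprD -/M (subnK kM) addnA (subnK kM) exprD in hM.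
exact: (gsym gK hM).
Qed.

Lemma ex_min : ~ K 1 -> exists e, [/\ S e, K (e * e - e), ~ K e &
  forall f, S f -> K (f * f - f) -> K (f * e - f) -> K f \/ K (f - e)].
Proof.
move=> nK1; case: Hn => r [_ hr2 hr3].
pose X (e : R) := [set i : 'I_n | pb (exists y, K (e * y - r i))].
suff H : forall k e, S e -> K (e * e - e) -> ~ K e -> (#|X e| <= k)%N -> exists e0, [/\ S e0, K (e0 * e0 - e0), ~ K e0 &
  forall f, S f -> K (f * f - f) -> K (f * e0 - f) -> K f \/ K (f - e0)].
  apply: (H #|X 1| 1) => //; first by case: HS.
  by rewrite mulr1 subrr; exact: (g0 gK).
elim => [|k IH] e Se ee ne hk.
  case: (hr3 e Logic.I) => i hi; have : i \in X e by rewrite inE; apply/pbP; exists 1; rewrite mulr1.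
  by move: hk; rewrite leqn0 cards_eq0 => /eqP ->; rewrite inE.
case: (classic (exists f, [/\ S f, K (f * f - f), K (f * e - f), ~ K f & ~ K (f - e)])).
  move=> [f [Sf ff fe nf nfe]]; apply: (IH f) => //.
  have : X f \proper X e.
    apply/properP; split.
      apply/subsetP => i; rewrite !inE => /pbP [y hy]; apply/pbP; exists (f * y).
      have -> : e * (f * y) - r i = (f * y - r i) + (f * e - f) * y by ring.
      exact: (gD gK hy (Kmulr _ fe)).
    case: (hr3 e Logic.I) => i0 hi0; exists i0.
      by rewrite inE; apply/pbP; exists 1; rewrite mulr1.
    rewrite inE; apply/negP => /pbP [y hy]; apply: nfe.
    have hfy : K (f * y - e) := gtr gK hy (gsym gK hi0).
    have -> : f - e = - (f * e - f) + f * (e - f * y) + (f * f - f) * y + (f * y - e) by ring.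
    apply: (gD gK); last exact: hfy.
    apply: (gD gK); last exact: Kmulr.
    apply: (gD gK); first exact: (gN gK).
    exact: (Kmul _ (gsym gK hfy)).
  by move/proper_card => lt; rewrite -ltnS (leq_trans lt hk).
move=> nex; exists e; split => // f Sf ff fe.
case: (classic (K f)) => [|nf]; first by left.
case: (classic (K (f - e))) => [|nfe]; first by right.
by exfalso; apply: nex; exists f; split.
Qed.

Section Min.
Variables (e : R) (Se : S e) (ee : K (e * e - e)) (ne : ~ K e)
  (emin : forall f, S f -> K (f * f - f) -> K (f * e - f) -> K f \/ K (f - e)).

Definition mloc := fun t => S t /\ exists k, K (t ^+ k * e).

Lemma unitm t : S t -> ~ mloc t -> exists N, K (t ^+ N.+1 * e - e).
Proof.
move=> St nm; have [N hN] := idpow t; exists N.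
set p := t ^+ N.+1 in hN *.
have Sp : S p by apply: srX.
case: (emin (f := p * e)).
- exact: srM.
- have -> : p * e * (p * e) - p * e = (p * p) * (e * e - e) + (p * p - p) * e by ring.
  exact: (gD gK (Kmul _ ee) (Kmulr _ hN)).
- have -> : p * e * e - p * e = p * (e * e - e) by ring.
  exact: Kmul.
- by move=> hf; case: nm; split => //; exists N.+1.
- done.
Qed.

Lemma m_ideal_S : is_ideal S mloc.
Proof.
split.
- by move=> x [].
- split; first exact: sr0.
  by exists 1%N; rewrite expr1 mul0r; exact: (g0 gK).
- move=> x y [Sx [a ha]] [Sy [b hb]]; split; first exact: srB.
  exists (a + b)%N; rewrite exprDn mulr_suml; apply: (isum HK) => i.
  rewrite mulrnAl -mulr_natr; apply: Kmulr.
  rewrite exprNn.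
  case: (leqP b i) => c.
    have -> : y ^+ i = y ^+ (i - b) * y ^+ b by rewrite -exprD subnK.
    set u := x ^+ _; set v := y ^+ (i - b); set w := y ^+ b; set s := (-1) ^+ _.
    have -> : u * (s * (v * w)) * e = (u * s * v) * (w * e) by ring.
    exact: Kmul.
  have hi : (a <= a + b - i)%N.
    by rewrite -addnBA ?leq_addr // ltnW.
  have -> : x ^+ (a + b - i) = x ^+ (a + b - i - a) * x ^+ a by rewrite -exprD subnK.
  set u := x ^+ (_ - a); set v := y ^+ i; set w := x ^+ a; set s := (-1) ^+ _.
  have -> : u * w * (s * v) * e = (u * s * v) * (w * e) by ring.
  exact: Kmul.
- move=> c x Sc [Sx [k hk]]; split; first exact: srM.
  by exists k; rewrite exprMn -mulrA; apply: Kmul.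
Qed.

Lemma m_max : is_maximal_ideal S mloc.
Proof.
split; first exact: m_ideal_S.
- by move=> [_ [k]]; rewrite expr1n mul1r.
- move=> J' hJ' sub.
  case: (classic (forall x, J' x -> mloc x)) => [h|]; first by left.
  move=> hn; have [t ht] := not_all_ex_not _ _ hn; have [Jt nmt] := imply_to_and _ _ ht; right.
  have St : S t := iA hJ' Jt.
  have [N hN] := unitm St nmt.
  have h1 : J' (1 - t ^+ N.+1).
    have StN : S (t ^+ N.+1) := srX N.+1 HS St.
    have S1 : S 1 by case: HS.
    apply: sub; split; first exact: (srB HS S1 StN).
    exists 1%N; rewrite expr1 mulrBl mul1r.
    by have := gN gK hN; rewrite opprB.
  have h2 : J' (t ^+ N.+1) by rewrite exprSr; apply: (iM hJ') => //; exact: (srX N HS St).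
  by have := iD hJ' h1 h2; rewrite subrK.
Qed.

Local Notation loc := (localization S mloc).
Let Hmax := m_max.
Let S1 : S 1. Proof. by case: HS. Qed.
Let nm1 : ~ mloc 1. Proof. exact: (m1 Hmax). Qed.

Definition locI (L : R -> Prop) : {fraction R} -> Prop :=
  fun x => exists a s, [/\ L a, S s, ~ mloc s & x = tf a / tf s].

Lemma locI_ideal L : is_ideal TT L -> is_ideal loc (locI L).
Proof.
move=> hL; split.
- by move=> x [a [s [_ Ss ms ->]]]; exists a, s.
- exists 0, 1; split => //; [exact: (i0 hL) | by rewrite tofrac0 mul0r].
- move=> x y [a [s [La Ss ms ->]]] [b [t [Lb St mt ->]]].
  exists (a * t - b * s), (s * t); split.
  + by apply: (iB hL); apply: (iMr hL).
  + exact: (srM HS).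
  + exact: (max_prime HS Hmax).
  + by rewrite fid4 ?(Sne0 Hmax) // tofracB !tofracM.
- move=> c x [c0 [u [Su mu ->]]] [a [s [La Ss ms ->]]].
  exists (c0 * a), (u * s); split.
  + exact: (iM hL).
  + exact: (srM HS).
  + exact: (max_prime HS Hmax).
  + by rewrite mulf_div !tofracM.
Qed.

Lemma loc_idx L : is_ideal TT L -> (forall z, K z -> L z) -> L (1 - e) ->
  forall k, ideal_index TT L k -> ideal_index loc (locI L) k.
Proof.
move=> hL KL L1e k hk.
apply: (@idx_fwd _ _ TT L loc (locI L) tf) => //.
- exact: (grp_ideal (locI_ideal hL)).
- by move=> a _; apply: (loc_tf HS Hmax).
- move=> a a' _ _ h; exists (a - a'), 1; split => //.
  by rewrite tofrac1 divr1 tofracB.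
- move=> a a' _ _ [b [s [Lb Ss ms E]]].
  have ys : (a - a') * s = b.
    apply/eqP; rewrite -tofrac_eq tofracM tofracB; apply/eqP.
    exact: (fid6 (Sne0 Hmax ms) E).
  have [N hN] := unitm Ss ms.
  set y := a - a' in ys *.
  have -> : y = (1 - e) * y - (s ^+ N.+1 * e - e) * y + s ^+ N * e * (y * s).
    rewrite exprS; set p := s ^+ N; ring.
  apply: (iD hL); last by rewrite ys; apply: (iM hL).
  apply: (iB hL); first exact: (iMr hL).
  by apply: KL; apply: Kmulr.
- move=> b [c [u [Su mu ->]]].
  have [N hN] := unitm Su mu.
  exists (u ^+ N * e * c); split => //.
  exists (c - u ^+ N.+1 * e * c), u; split => //.
  + have -> : c - u ^+ N.+1 * e * c = (1 - e) * c - (u ^+ N.+1 * e - e) * c by ring.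
    apply: (iB hL); first exact: (iMr hL).
    by apply: KL; apply: Kmulr.
  + rewrite fid8 ?(Sne0 Hmax) // -tofracM -tofracB.
    by congr (tf (c - _) / _); rewrite exprS; set p := u ^+ N; ring.
Qed.

Lemma local_part (Hsm : super_multiplicative loc) p1 q1 n1 :
  ideal_index TT (addp I (1 - e)) p1 -> ideal_index TT (addp J (1 - e)) q1 ->
  ideal_index TT (addp K (1 - e)) n1 -> (p1 * q1 <= n1)%N.
Proof.
move=> Hp Hq Hn1.
have hI1 := addp_ideal (1 - e) HI.
have hJ1 := addp_ideal (1 - e) HJ.
have hK1 := addp_ideal (1 - e) HK.
have KI z : K z -> I z by apply: (im_subl HI).
have KJ z : K z -> J z by apply: (im_subr HJ).
have aI : addp I (1 - e) (1 - e) by have := @addp_a _ I (1 - e) 1 HI; rewrite mulr1.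
have aJ : addp J (1 - e) (1 - e) by have := @addp_a _ J (1 - e) 1 HJ; rewrite mulr1.
have aK : addp K (1 - e) (1 - e) by have := @addp_a _ K (1 - e) 1 HK; rewrite mulr1.
have Hp1 := loc_idx hI1 (fun z hz => addp_sup _ HI (KI z hz)) aI Hp.
have Hq1 := loc_idx hJ1 (fun z hz => addp_sup _ HJ (KJ z hz)) aJ Hq.
have Hn1' := loc_idx hK1 (fun z hz => addp_sup _ HK hz) aK Hn1.
have ee' : K ((1 - e) * (1 - e) - (1 - e)).
  by have -> : (1 - e) * (1 - e) - (1 - e) = e * e - e by ring.
have MP := mulp HI HJ ee'.
have hP := locI_ideal hI1; have hQ := locI_ideal hJ1.
apply: (Hsm _ _ hP hQ _ _ _ _ Hp1 Hq1).
apply: (idx_ext _ Hn1') => z; split.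
- move=> [a [s [K1a Ss ms ->]]].
  move/MP: K1a.
  apply: (im_ind (P := fun a => ideal_mul (locI (addp I (1 - e))) (locI (addp J (1 - e))) (tf a / tf s))).
  + by rewrite tofrac0 mul0r; exact: im0.
  + by move=> x y hx hy; rewrite tofracD mulrDl; apply: im_add.
  + move=> x y hx hy; rewrite tofracM fid7; apply: im_prod.
    * by exists x, 1; split => //; rewrite tofrac1.
    * by exists y, s; split.
- apply: (im_ind (P := locI (addp K (1 - e)))).
  + exact: (i0 (locI_ideal hK1)).
  + by move=> ????; apply: (iD (locI_ideal hK1)).
  + move=> x y [a [s [La Ss ms ->]]] [b [t [Lb St mt ->]]].
    exists (a * b), (s * t); split.
    * by apply/MP; apply: im_prod.
    * exact: (srM HS).
    * exact: (max_prime HS Hmax).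
    * by rewrite mulf_div !tofracM.
Qed.
End Min.


Lemma step (Hloc : forall m, is_maximal_ideal S m -> super_multiplicative (localization S m))
  (IH : forall n', (n' < n)%N -> forall I J, is_ideal TT I -> is_ideal TT J ->
     forall p q, ideal_index TT (ideal_mul I J) n' -> ideal_index TT I p ->
     ideal_index TT J q -> (p * q <= n')%N)
  (nK1 : ~ K 1) p q : ideal_index TT I p -> ideal_index TT J q -> (p * q <= n)%N.
Proof.
move=> Hp Hq.
have [e [Se ee ne emin]] := ex_min nK1.
have KI z : K z -> I z by apply: (im_subl HI).
have KJ z : K z -> J z by apply: (im_subr HJ).
have [n1 [n2 [Hn1 Hn2 En]]] := decomp HK ee Hn.
have [p1 [p2 [Hp1 Hp2 Ep]]] := decomp HI (KI _ ee) Hp.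
have [q1 [q2 [Hq1 Hq2 Eq]]] := decomp HJ (KJ _ ee) Hq.
have L1 := local_part Se ee ne emin (Hloc _ (m_max Se ee ne emin)) Hp1 Hq1 Hn1.
have n1gt : (1 < n1)%N.
  apply: (idx_ge2 (grp_ideal (addp_ideal (1 - e) HK))) Hn1 => //.
  move=> [l [r [Kl e1]]]; apply: ne.
  have -> : e = e * l - r * (e * e - e).
    by rewrite -[X in X = _]mulr1 e1; ring.
  exact: (gB gK (Kmul _ Kl) (Kmul _ ee)).
have n2pos : (0 < n2)%N by apply: (idx_pos _ Hn2).
have lt2 : (n2 < n)%N.
  by rewrite En -{1}(mul1n n2) ltn_mul2r n2pos.
have hI2 := addp_ideal e HI; have hJ2 := addp_ideal e HJ.
have Hn2' : ideal_index TT (ideal_mul (addp I e) (addp J e)) n2.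
  apply: (idx_ext _ Hn2) => z; split; by move/(mulp HI HJ ee).
have L2 := IH _ lt2 _ _ hI2 hJ2 _ _ Hn2' Hp2 Hq2.
by rewrite Ep Eq En mulnACA leq_mul.
Qed.
End Step.

Lemma back_main (R : idomainType) (S : R -> Prop) (HS : is_subring S)
  (Hloc : forall m, is_maximal_ideal S m -> super_multiplicative (localization S m)) :
  super_multiplicative (fun _ : R => True).
Proof.
move=> I J HI HJ n; elim/ltn_ind: n I J HI HJ => n IH I J HI HJ p q Hn Hp Hq.
case: (classic (ideal_mul I J 1)) => [K1 | nK1]; last first.
  exact: (step HS HI HJ Hn Hloc IH nK1 Hp Hq).
have HK := im_ideal (@TT_subring R) HI HJ.
have I1 : I 1 := im_subl HI (fun _ _ => Logic.I) K1.
have J1 : J 1 := im_subr HJ (fun _ _ => Logic.I) K1.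
have -> : p = 1%N.
  apply: (idx_one (grp_ideal HI) _ _ Hp) => // a _.
  by rewrite -(mulr1 a); apply: (iM HI).
have -> : q = 1%N.
  apply: (idx_one (grp_ideal HJ) _ _ Hq) => // a _.
  by rewrite -(mulr1 a); apply: (iM HJ).
exact: (idx_pos _ Hn).
Qed.

Unset Implicit Arguments.

Theorem lemma2p9 (R : idomainType) (S : R -> Prop) (HS : is_subring S) :
  super_multiplicative (fun _ : R => True) <->
  (forall m : R -> Prop, is_maximal_ideal S m ->
     super_multiplicative (localization S m)).
Proof.
split; first exact: forward.
exact: back_main.
Qed.
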